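(* For every program $C\in$ pProgs and every $\omega$-chain of run-times $f_1\preceq f_2\preceq\cdots$ in $\mathbb{T}$, $\mathsf{ert}[C](\sup_n f_n)=\sup_n \mathsf{ert}[C](f_n)$, where suprema are taken pointwise.
   Context: Programs $C\in$ pProgs are generated by the grammar $C ::= \mathtt{empty} \mid \mathtt{skip} \mid \mathtt{halt} \mid x :\approx \mu \mid C;C \mid \{C\}\,\square\,\{C\} \mid \mathtt{if}\,(\xi)\,\{C\}\,\mathtt{else}\,\{C\} \mid \mathtt{while}\,(\xi)\,\{C\}$, where $x$ is a program variable, $\mu$ a distribution expression and $\xi$ a probabilistic guard. A state $\sigma\in\Sigma$ maps variables to values; $[\![\mu]\!]:\Sigma\to\mathcal{D}(\mathsf{Vals})$ gives discrete distributions of total mass 1, and $[\xi:\mathsf{true}](\sigma)$, $[\xi:\mathsf{false}](\sigma)=1-[\xi:\mathsf{true}](\sigma)$ are the guard probabilities. Run-times: $\mathbb{T}=\{f:\Sigma\to\mathbb{R}_{\ge0}\cup\{\infty\}\}$, ordered pointwise by $\preceq$, with pointwise arithmetic; $\mathbf{c}=\lambda\sigma.c$. The transformer $\mathsf{ert}[C]:\mathbb{T}\to\mathbb{T}$: $\mathsf{ert}[\mathtt{empty}](f)=f$; $\mathsf{ert}[\mathtt{skip}](f)=\mathbf{1}+f$; $\mathsf{ert}[\mathtt{halt}](f)=\mathbf{0}$; $\mathsf{ert}[x:\approx\mu](f)=\mathbf{1}+\lambda\sigma.\sum_v[\![\mu]\!](\sigma)(v)\, f(\sigma[x/v])$; $\mathsf{ert}[C_1;C_2](f)=\mathsf{ert}[C_1](\mathsf{ert}[C_2](f))$;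 $\mathsf{ert}[\{C_1\}\square\{C_2\}](f)=\max\{\mathsf{ert}[C_1](f),\mathsf{ert}[C_2](f)\}$; $\mathsf{ert}[\mathtt{if}(\xi)\{C_1\}\mathtt{else}\{C_2\}](f)=\mathbf{1}+[\xi:\mathsf{true}]\cdot\mathsf{ert}[C_1](f)+[\xi:\mathsf{false}]\cdot\mathsf{ert}[C_2](f)$; $\mathsf{ert}[\mathtt{while}(\xi)\{C'\}](f)=\mathrm{lfp}\,X.\ \mathbf{1}+[\xi:\mathsf{false}]\cdot f+[\xi:\mathsf{true}]\cdot\mathsf{ert}[C'](X)$. *)

(* Defs.v *)
(* run-times are [0,oo]-valued functions, encoded as
   functions into the extended reals \bar R that are pointwise nonnegative. *)
From HB Require Import structures.
From mathcomp Require Import all_boot all_order all_algebra.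
From mathcomp Require Import all_classical all_reals all_analysis.
Set Implicit Arguments. Unset Strict Implicit. Unset Printing Implicit Defensive.
Import Order.TTheory GRing.Theory Num.Theory.
Local Open Scope classical_set_scope.
Local Open Scope ring_scope.

Section PProgs.
Variables (R : realType) (Var : eqType) (Val : choiceType).

Definition state := Var -> Val.

Definition upd (s : state) (x : Var) (v : Val) : state :=
  fun y => if y == x then v else s y.

Record dexp := DExp {
  dsem : state -> Val -> R;
  dsem_ge0 : forall s v, 0 <= dsem s v;
  dsem_mass1 : forall s, (\esum_(v in [set: Val]) (dsem s v)%:E = 1)%E }.

Record pguard := PGuard {
  gtrue : state -> R;
  gtrue_ge0 : forall s, 0 <= gtrue s;
  gtrue_le1 : forall s, gtrue s <= 1 }.

Definition gfalse (g : pguard) (s : state) : R := 1 - gtrue g s.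

Inductive prog :=
| PEmpty
| PSkip
| PHalt
| PAssign of Var & dexp
| PSeq of prog & prog
| PNDet of prog & prog
| PIte of pguard & prog & prog
| PWhile of pguard & prog.

Definition runtime := state -> \bar R.
Definition is_runtime (f : runtime) : Prop := forall s, (0 <= f s)%E.
Definition rt_le (f g : runtime) : Prop := forall s, (f s <= g s)%E.

(* least fixed point on the complete lattice T (pointwise order):
   the (pointwise) infimum of all pre-fixed points in T (Knaster-Tarski) *)
Definition lfp (Phi : runtime -> runtime) : runtime :=
  fun s => ereal_inf [set y | exists X : runtime,
             [/\ is_runtime X, rt_le (Phi X) X & y = X s]].

Local Open Scope ereal_scope.

Fixpoint ert (c : prog) (f : runtime) : runtime :=
  match c with
  | PEmpty => f
  | PSkip => fun s => 1 + f s
  | PHalt => fun _ => 0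
  | PAssign x mu => fun s =>
      1 + \esum_(v in [set: Val]) ((dsem mu s v)%:E * f (upd s x v))
  | PSeq c1 c2 => ert c1 (ert c2 f)
  | PNDet c1 c2 => fun s => maxe (ert c1 f s) (ert c2 f s)
  | PIte g c1 c2 => fun s =>
      1 + (gtrue g s)%:E * ert c1 f s + (gfalse g s)%:E * ert c2 f s
  | PWhile g c' => lfp (fun X s =>
      1 + (gfalse g s)%:E * f s + (gtrue g s)%:E * ert c' X s)
  end.

Definition rt_sup (F : nat -> runtime) : runtime :=
  fun s => ereal_sup (range (fun n => F n s)).

End PProgs.

(* Main.v *)
Require Import Defs.
From HB Require Import structures.
From mathcomp Require Import all_boot all_order all_algebra.
From mathcomp Require Import all_classical all_reals all_analysis.
Set Implicit Arguments. Unset Strict Implicit. Unset Printing Implicit Defensive.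
Import Order.TTheory GRing.Theory Num.Theory.
Local Open Scope classical_set_scope.
Local Open Scope ring_scope.
Local Open Scope ereal_scope.

Section Sup.
Variable R : realType.
Implicit Types u v : nat -> \bar R.
Notation S u := (ereal_sup (range u)).

Lemma S_ub u n : u n <= S u.
Proof. by apply: ereal_sup_ubound; exists n. Qed.

Lemma S_le u x : (forall n, u n <= x) -> S u <= x.
Proof. by move=> H; apply: ge_ereal_sup => _ [n _ <-]. Qed.

Lemma S_mono u v : (forall n, u n <= v n) -> S u <= S v.
Proof. by move=> H; apply: S_le => n; apply: le_trans (H n) (S_ub _ _). Qed.

Lemma S_cvg u e : (forall n, u n <= u n.+1) -> u @ \oo --> e -> S u = e.
Proof.
move=> /nondecreasing_seqP /ereal_nondecreasing_cvgn h1 h2.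
exact: (cvg_unique _ h1 h2).
Qed.

Lemma S_cst (x : \bar R) : S (fun _ : nat => x) = x.
Proof. by apply: S_cvg => //; exact: cvg_cst. Qed.

Lemma S_add u v : (forall n, u n <= u n.+1) -> (forall n, v n <= v n.+1) ->
  (forall n, 0 <= u n) -> (forall n, 0 <= v n) ->
  S (fun n => u n + v n) = S u + S v.
Proof.
move=> hu hv u0 v0; apply: S_cvg; first by move=> n; apply: leeD.
apply: cvgeD.
- apply: ge0_adde_def; rewrite inE.
  + exact: le_trans (u0 0%N) (S_ub _ _).
  + exact: le_trans (v0 0%N) (S_ub _ _).
- exact/ereal_nondecreasing_cvgn/nondecreasing_seqP.
- exact/ereal_nondecreasing_cvgn/nondecreasing_seqP.
Qed.

Lemma S_scale (r : R) u : (0 <= r)%R -> (forall n, u n <= u n.+1) ->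
  S (fun n => r%:E * u n) = r%:E * S u.
Proof.
move=> r0 hu; apply: S_cvg; first by move=> n; apply: lee_wpmul2l; rewrite ?lee_fin.
by apply: cvgeZl => //; exact/ereal_nondecreasing_cvgn/nondecreasing_seqP.
Qed.

Lemma S_max u v : S (fun n => maxe (u n) (v n)) = maxe (S u) (S v).
Proof.
apply/eqP; rewrite eq_le; apply/andP; split.
  apply: S_le => n; rewrite ge_max !le_max.
  by rewrite (S_ub u n) (S_ub v n) orbT.
rewrite ge_max; apply/andP; split; apply: S_mono => n; rewrite le_max lexx ?orbT //.
Qed.

Lemma S_swap (a : nat -> nat -> \bar R) :
  S (fun k => S (fun n => a n k)) = S (fun n => S (fun k => a n k)).
Proof.
apply/eqP; rewrite eq_le; apply/andP; split; apply: S_le => i; apply: S_le => j.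
  exact: le_trans (S_ub (fun k => a j k) i) (S_ub _ j).
exact: le_trans (S_ub (fun n => a n j) i) (S_ub _ j).
Qed.

Lemma S_bigsum (T : Type) (a : nat -> T -> \bar R) (s : seq T) :
  (forall n x, 0 <= a n x) -> (forall n x, a n x <= a n.+1 x) ->
  \sum_(x <- s) S (fun n => a n x) = S (fun n => \sum_(x <- s) a n x).
Proof.
move=> a0 am; elim: s => [|y s IH].
  by rewrite big_nil; under eq_fun do rewrite big_nil; rewrite S_cst.
rewrite big_cons IH; under [in RHS]eq_fun do rewrite big_cons.
rewrite S_add //.
- by move=> n; apply: lee_sum => x _.
- by move=> n; apply: sume_ge0.
Qed.

Lemma S_esum (T : choiceType) (a : nat -> T -> \bar R) :
  (forall n x, 0 <= a n x) -> (forall n x, a n x <= a n.+1 x) ->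
  \esum_(x in [set: T]) S (fun n => a n x) = S (fun n => \esum_(x in [set: T]) a n x).
Proof.
move=> a0 am; apply/eqP; rewrite eq_le; apply/andP; split; last first.
  by apply: S_le => n; apply: le_esum => x _; exact: S_ub.
apply: ge_ereal_sup => _ [X [finX _] <-].
rewrite fsbig_finite // S_bigsum //; apply: S_mono => n.
rewrite -fsbig_finite //; apply: esum_ge; exists X => //.
Qed.

Lemma S_affine (p q : R) u v : (0 <= p)%R -> (0 <= q)%R ->
  (forall n, u n <= u n.+1) -> (forall n, v n <= v n.+1) ->
  (forall n, 0 <= u n) -> (forall n, 0 <= v n) ->
  S (fun n => 1 + p%:E * u n + q%:E * v n) = 1 + p%:E * S u + q%:E * S v.
Proof.
move=> p0 q0 hu hv u0 v0.
have pu0 n : 0 <= p%:E * u n by apply: mule_ge0; rewrite ?lee_fin.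
have qv0 n : 0 <= q%:E * v n by apply: mule_ge0; rewrite ?lee_fin.
have hpu n : p%:E * u n <= p%:E * u n.+1 by apply: lee_wpmul2l; rewrite ?lee_fin.
have hqv n : q%:E * v n <= q%:E * v n.+1 by apply: lee_wpmul2l; rewrite ?lee_fin.
rewrite (S_add (u := fun n => 1 + p%:E * u n) (v := fun n => q%:E * v n)) //.
- rewrite (S_add (u := fun _ => 1) (v := fun n => p%:E * u n)) //.
  by rewrite S_cst !S_scale.
- by move=> n; apply: leeD2l.
- by move=> n; apply: adde_ge0.
Qed.
End Sup.

Section Main.
Variables (R : realType) (Var : eqType) (Val : choiceType).
Notation runtime := (runtime R Var Val).
Notation S u := (ereal_sup (range u)).

Lemma gfalse_ge0 (g : pguard R Var Val) s : (0 <= gfalse g s)%R.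
Proof. by rewrite /gfalse subr_ge0 gtrue_le1. Qed.

Lemma ert_ge0 (c : prog R Var Val) (f : runtime) :
  is_runtime f -> is_runtime (ert c f).
Proof.
elim: c f => [|||x mu|c1 IH1 c2 IH2|c1 IH1 c2 IH2|g c1 IH1 c2 IH2|g c IH] f hf s /=.
- exact: hf.
- by apply: adde_ge0.
- by [].
- apply: adde_ge0 => //; apply: esum_ge0 => v _; apply: mule_ge0 => //.
  by rewrite lee_fin dsem_ge0.
- by apply: IH1; apply: IH2.
- by rewrite le_max IH1.
- apply: adde_ge0; first apply: adde_ge0 => //; apply: mule_ge0;
    rewrite ?lee_fin ?gtrue_ge0 ?gfalse_ge0 //; [exact: IH1|exact: IH2].
- by apply: le_ereal_inf_tmp => _ [X [hX _ ->]].
Qed.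

Definition cont (E : runtime -> runtime) := forall F : nat -> runtime,
  (forall n, is_runtime (F n)) -> (forall n, rt_le (F n) (F n.+1)) ->
  E (rt_sup F) = rt_sup (fun n => E (F n)).

Definition pres (E : runtime -> runtime) := forall X, is_runtime X -> is_runtime (E X).

Lemma rt_sup_ge0 (F : nat -> runtime) : (forall n, is_runtime (F n)) -> is_runtime (rt_sup F).
Proof. by move=> h s; apply: le_trans (h 0%N s) (S_ub _ _). Qed.

Lemma rt_sup_cst (f : runtime) : rt_sup (fun _ : nat => f) = f.
Proof. by apply: funext => s; rewrite /rt_sup S_cst. Qed.

Lemma cont_mono E : cont E -> forall f g, is_runtime f -> is_runtime g ->
  rt_le f g -> rt_le (E f) (E g).
Proof.
move=> hE f g hf hg hfg.
pose G (n : nat) := if n is 0%N then f else g.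
have hG : rt_sup G = g.
  apply: funext => s; apply/eqP; rewrite eq_le; apply/andP; split.
    by apply: S_le => -[|n] /=.
  exact: (S_ub (fun n => G n s) 1%N).
have := hE G; rewrite hG => ->.
- by move=> s; exact: (S_ub (fun n => E (G n) s) 0%N).
- by case.
- by move=> [|n] s //=.
Qed.

Lemma kleene (Psi : runtime -> runtime) : pres Psi -> cont Psi ->
  lfp Psi = rt_sup (fun k => iter k Psi (fun _ => 0)).
Proof.
move=> hP hC; have hM := cont_mono hC.
pose I k := iter k Psi (fun _ => 0).
have I0 k : is_runtime (I k) by elim: k => [|k IH] s //=; apply: hP.
have Im k : rt_le (I k) (I k.+1).
  elim: k => [|k IH] s; first exact: (I0 1%N s).
  by apply: hM; [exact: (I0 k)|exact: (I0 k.+1)|exact: IH].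
apply: funext => s; apply/eqP; rewrite eq_le; apply/andP; split.
  apply: ereal_inf_lbound; exists (rt_sup I); split => //.
  - exact: rt_sup_ge0.
  - by rewrite (hC I) // => t; apply: S_le => n; exact: (S_ub (fun k => I k t) n.+1).
apply: le_ereal_inf_tmp => _ [X [hX hpre ->]]; apply: S_le => k.
suff : rt_le (I k) X by apply.
elim: k => [|k IH] t /=; first exact: hX.
apply: le_trans (hpre t); exact: hM.
Qed.

Definition wbody (E : runtime -> runtime) (g : pguard R Var Val) (f X : runtime) : runtime :=
  fun s => 1 + (gfalse g s)%:E * f s + (gtrue g s)%:E * E X s.

Section While.
Variables (E : runtime -> runtime) (g : pguard R Var Val).
Hypotheses (hP : pres E) (hC : cont E).

Lemma wbody_ge0 f X : is_runtime f -> is_runtime X -> is_runtime (wbody E g f X).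
Proof.
move=> hf hX s; rewrite /wbody; apply: adde_ge0; first apply: adde_ge0 => //;
  apply: mule_ge0; rewrite ?lee_fin ?gtrue_ge0 ?gfalse_ge0 //; exact: hP.
Qed.

Lemma wbody_mono f f' X X' : is_runtime f -> is_runtime f' -> is_runtime X ->
  is_runtime X' -> rt_le f f' -> rt_le X X' -> rt_le (wbody E g f X) (wbody E g f' X').
Proof.
move=> hf hf' hX hX' hff hXX s; rewrite /wbody; apply: leeD; first apply: leeD2l;
  apply: lee_wpmul2l; rewrite ?lee_fin ?gtrue_ge0 ?gfalse_ge0 //.
exact: (cont_mono hC).
Qed.

Lemma wbody_joint (F Y : nat -> runtime) :
  (forall n, is_runtime (F n)) -> (forall n, rt_le (F n) (F n.+1)) ->
  (forall n, is_runtime (Y n)) -> (forall n, rt_le (Y n) (Y n.+1)) ->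
  wbody E g (rt_sup F) (rt_sup Y) = rt_sup (fun n => wbody E g (F n) (Y n)).
Proof.
move=> hF mF hY mY; apply: funext => s; rewrite /wbody (hC hY mY) /rt_sup.
rewrite S_affine //.
- exact: gfalse_ge0.
- exact: gtrue_ge0.
- by move=> n; exact: (mF n _).
- by move=> n; apply: (cont_mono hC) => //.
- by move=> n; apply: hF.
- by move=> n; apply: hP.
Qed.

Lemma wbody_cont f : is_runtime f -> cont (wbody E g f).
Proof.
move=> hf Y hY mY; rewrite -{1}(rt_sup_cst f) wbody_joint //.
by move=> n s; exact: lexx.
Qed.

Lemma while_lfp f : is_runtime f ->
  lfp (wbody E g f) = rt_sup (fun k => iter k (wbody E g f) (fun _ => 0)).
Proof.
move=> hf; apply: kleene; last exact: wbody_cont.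
by move=> X hX; apply: wbody_ge0.
Qed.

Lemma while_cont : cont (fun f => lfp (wbody E g f)).
Proof.
move=> F hF mF.
have hsF := rt_sup_ge0 hF.
pose It f k := iter k (wbody E g f) (fun _ => 0).
have It0 f k : is_runtime f -> is_runtime (It f k).
  by move=> hf; elim: k => [|k IH] s //=; apply: wbody_ge0.
have Itm k n : rt_le (It (F n) k) (It (F n.+1) k).
  elim: k => [|k IH] s //=; apply: wbody_mono => //; try exact: (It0 _ k).
have ItS k : It (rt_sup F) k = rt_sup (fun n => It (F n) k).
  elim: k => [|k IH] /=; first by rewrite rt_sup_cst.
  rewrite IH wbody_joint //.
  by move=> n; exact: (It0 _ k).
rewrite while_lfp //.
have -> : (fun n => lfp (wbody E g (F n))) = (fun n => rt_sup (It (F n))).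
  by apply: funext => n; rewrite while_lfp.
apply: funext => s; rewrite /rt_sup.
have -> : (fun k => iter k (wbody E g (rt_sup F)) (fun=> 0) s) =
          (fun k => S (fun n => It (F n) k s)).
  by apply: funext => k; rewrite -[iter k _ _]/(It _ k) ItS.
exact: S_swap.
Qed.
End While.
End Main.

Lemma ert_cont (R : realType) (Var : eqType) (Val : choiceType) (c : prog R Var Val) :
  cont (ert c).
Proof.
elim: c => [| | | x mu | c1 IH1 c2 IH2|c1 IH1 c2 IH2|g c1 IH1 c2 IH2|g c IH] F hF mF.
- by [].
- apply: funext => s; rewrite /= /rt_sup.
  rewrite (S_add (u := fun _ => 1) (v := fun n => F n s)) ?S_cst //.
  all: try by move=> n; exact: (mF n s).
  all: try by move=> n; exact: (hF n s).
  all: try by move=> _; rewrite ?lee01 ?lexx.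
- by apply: funext => s; rewrite /rt_sup /= S_cst.
- apply: funext => s; rewrite /= /rt_sup.
  have d0 v : (0 <= (dsem mu s v)%:E) by rewrite lee_fin dsem_ge0.
  rewrite (S_add (u := fun _ => 1)
    (v := fun n => \esum_(v in [set: Val]) ((dsem mu s v)%:E * F n (upd s x v)))) ?S_cst //.
  + rewrite -(S_esum (a := fun n v => (dsem mu s v)%:E * F n (upd s x v))).
    * by congr (1 + _); apply: eq_esum => v _; rewrite S_scale ?dsem_ge0 // => n; exact: (mF n _).
    * by move=> n v; apply: mule_ge0; [exact: d0|exact: (hF n _)].
    * by move=> n v; apply: lee_wpmul2l => //; exact: (mF n _).
  + by move=> n; apply: le_esum => v _; apply: lee_wpmul2l => //; exact: (mF n _).
  + by move=> n; apply: esum_ge0 => v _; apply: mule_ge0; [exact: d0|exact: (hF n _)].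
- rewrite /= IH2 //; apply: IH1.
  + by move=> n; apply: ert_ge0.
  + by move=> n; apply: (cont_mono IH2) => //; apply: ert_ge0.
- apply: funext => s; rewrite /= IH1 // IH2 //; rewrite /rt_sup; by rewrite S_max.
- apply: funext => s; rewrite /= IH1 // IH2 // /rt_sup S_affine //.
  + exact: gtrue_ge0.
  + exact: gfalse_ge0.
  + by move=> n; apply: (cont_mono IH1) => //; apply: ert_ge0.
  + by move=> n; apply: (cont_mono IH2) => //; apply: ert_ge0.
  + by move=> n; apply: ert_ge0.
  + by move=> n; apply: ert_ge0.
- exact: (@while_cont R Var Val (ert c) g (fun X hX => ert_ge0 c hX) IH F hF mF).
Qed.

Theorem lemma1 (R : realType) (Var : eqType) (Val : choiceType)
  (C : prog R Var Val) (F : nat -> runtime R Var Val) :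
  (forall n, is_runtime (F n)) ->
  (forall n, rt_le (F n) (F n.+1)) ->
  ert C (rt_sup F) = rt_sup (fun n => ert C (F n)).
Proof. exact: ert_cont. Qed.
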